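(* Assume Assumption A holds. Then $\mathcal{M}'=\mathcal{M}$, where $\mathcal{M}'$ is the set of $\mu\in\mathcal{M}$ such that for every $(s,t)\in S\times T$, $\sum_{s'\in S}\mu(s'\mid t)\,p(s\mid s')=\sum_{t'\in T}\mu(s\mid t')\,p(t'\mid t)$.
   Context: $S$ is a finite set and $T$ is a copy of $S$. $p(\cdot\mid\cdot)$ is the transition function of an irreducible aperiodic Markov chain on $S$ with invariant measure $m$ (full support). Assumption A: there exist nonnegative numbers $\alpha_s$, $s\in S$, with $\sum_{s\in S\setminus\{\bar s\}}\alpha_s\le1$ for every $\bar s\in S$, such that $p(s'\mid s)=\alpha_{s'}$ whenever $s'\neq s$. $\mathcal{M}$ is the set of probability distributions $\mu$ on $S\times T$ both of whose marginals equal $m$, and $\mu(s\mid t)=\mu(s,t)/m(t)$. *)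

(* Defs.v *)
From HB Require Import structures.
From mathcomp Require Import all_boot all_order all_algebra.
Set Implicit Arguments. Unset Strict Implicit. Unset Printing Implicit Defensive.
Import Order.TTheory GRing.Theory Num.Theory.
Local Open Scope ring_scope.

(* Convention: P s s' = p(s' | s), the probability of moving from s to s'. *)

Definition is_stochastic (R : realFieldType) (S : finType) (P : S -> S -> R) : Prop :=
  (forall s s', 0 <= P s s') /\ (forall s, \sum_(s' : S) P s s' = 1).

Fixpoint nstep (R : realFieldType) (S : finType) (P : S -> S -> R) (n : nat)
  (s s' : S) : R :=
  match n with
  | O => (s == s')%:R
  | k.+1 => \sum_(u : S) nstep P k s u * P u s'
  end.

Definition mc_irreducible (R : realFieldType) (S : finType) (P : S -> S -> R) : Prop :=
  forall s s' : S, exists n : nat, 0 < nstep P n s s'.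

(* every state has period 1: gcd of return times {n >= 1 : p^(n)(s|s) > 0} is 1 *)
Definition mc_aperiodic (R : realFieldType) (S : finType) (P : S -> S -> R) : Prop :=
  forall (s : S) (d : nat),
    (forall n : nat, (0 < n)%N -> 0 < nstep P n s s -> (d %| n)%N) -> d = 1%N.

Definition mc_invariant (R : realFieldType) (S : finType) (P : S -> S -> R)
  (m : S -> R) : Prop :=
  forall s : S, m s = \sum_(s' : S) m s' * P s' s.

Definition full_support (R : realFieldType) (S : finType) (m : S -> R) : Prop :=
  forall s : S, 0 < m s.

Definition assumptionA (R : realFieldType) (S : finType) (P : S -> S -> R) : Prop :=
  exists alpha : S -> R,
    (forall s, 0 <= alpha s) /\
    (forall sbar : S, \sum_(s : S | s != sbar) alpha s <= 1) /\
    (forall s s' : S, s' != s -> P s s' = alpha s').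

(* The set M: probability distributions mu on S x T (T a copy of S) with
   both marginals equal to m.  mu s t = mu(s,t). *)
Definition inM (R : realFieldType) (S : finType) (m : S -> R) (mu : S -> S -> R)
  : Prop :=
  (forall s t, 0 <= mu s t) /\
  (\sum_(s : S) \sum_(t : S) mu s t = 1) /\
  (forall s, \sum_(t : S) mu s t = m s) /\
  (forall t, \sum_(s : S) mu s t = m t).

Definition condM (R : realFieldType) (S : finType) (m : S -> R) (mu : S -> S -> R)
  (s t : S) : R := mu s t / m t.

Definition inM' (R : realFieldType) (S : finType) (P : S -> S -> R) (m : S -> R)
  (mu : S -> S -> R) : Prop :=
  inM m mu /\
  forall s t : S,
    \sum_(s' : S) condM m mu s' t * P s' s
    = \sum_(t' : S) condM m mu s t' * P t t'.

(* Main.v *)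
Require Import Defs.
From HB Require Import structures.
From mathcomp Require Import all_boot all_order all_algebra.
From mathcomp Require Import ring lra.
Import Order.TTheory GRing.Theory Num.Theory.
Local Open Scope ring_scope.

Lemma sum_delta (R : realFieldType) (S : finType) (F : S -> R) (y : S) :
  \sum_x F x * (x == y)%:R = F y.
Proof.
rewrite (bigD1 y) //= eqxx mulr1 big1 ?addr0 // => x /negbTE ->.
by rewrite mulr0.
Qed.

Lemma sum_delta' (R : realFieldType) (S : finType) (F : S -> R) (y : S) :
  \sum_x F x * (y == x)%:R = F y.
Proof. by under eq_bigr => x _ do rewrite eq_sym; exact: sum_delta. Qed.

Theorem lemma6 (R : realFieldType) (S : finType) (P : S -> S -> R) (m : S -> R) :
  is_stochastic P -> mc_irreducible P -> mc_aperiodic P ->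
  mc_invariant P m -> full_support m ->
  assumptionA P ->
  forall mu : S -> S -> R, inM' P m mu <-> inM m mu.
Proof.
move=> [P0 P1] _ _ Hinv Hfs [alpha [a0 [a1 aP]]] mu.
split; first by case.
move=> HM; split => //.
case: HM => [mu0 [mu1 [mur muc]]].
set b := 1 - \sum_u alpha u.
have key : forall x y, P x y = alpha y + (x == y)%:R * b.
  move=> x y; case: (eqVneq x y) => [<-|nxy].
    rewrite /= mul1r /b.
    have H := P1 x; rewrite (bigD1 x) //= in H.
    have E : \sum_(i | i != x) P x i = \sum_(i | i != x) alpha i.
      by apply: eq_bigr => i Hi; apply: aP.
    rewrite (bigD1 x) //= -E.
    apply/eqP; rewrite -subr_eq0; apply/eqP.
    rewrite -H; ring.
  by rewrite /= mul0r addr0 aP // eq_sym.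
have msum : \sum_s m s = 1.
  by rewrite -mu1; apply: eq_bigr => s _; rewrite mur.
have amt : forall t, alpha t = m t * (1 - b).
  move=> t; have := Hinv t.
  under eq_bigr => s' _ do rewrite key mulrDr.
  rewrite big_split /= -big_distrl /= msum mul1r.
  under eq_bigr => s' _ do rewrite mulrA.
  rewrite -big_distrl /= sum_delta => E.
  by rewrite mulrBr mulr1 {1}E; ring.
have mne : forall t, m t != 0 by move=> t; rewrite gt_eqF // Hfs.
move=> s t; rewrite /condM.
under eq_bigr => s' _ do rewrite key mulrDr mulrA.
under [in RHS]eq_bigr => t' _ do rewrite key mulrDr mulrA.
rewrite !big_split /= -!big_distrl /= sum_delta sum_delta'.
congr (_ + _).
rewrite muc divff ?mne // mul1r.
under eq_bigr => t' _ do rewrite amt mulrA divfK ?mne //.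
by rewrite -big_distrl /= mur amt.
Qed.
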